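(* Let $T$ be a search tree on a finite tree $\mathcal{T}$ and let $\mathcal{H}$ be a nonempty connected subgraph of $\mathcal{T}$. Then there is a unique search tree $T|_{\mathcal{H}}$ on $\mathcal{H}$ such that for every $v\in V(\mathcal{H})$, $$\mathtt{Path}_{T|_{\mathcal{H}}}(v)=\mathtt{Path}_T(v)\cap V(\mathcal{H}).$$
   Context: A search tree on a tree $\mathcal{T}$ is a rooted tree $T$ with vertex set $V(\mathcal{T})$ defined recursively: its root is an arbitrary vertex $r$, and the children of $r$ are the roots of search trees built on the connected components of $\mathcal{T}-r$; a single-vertex tree has only itself as search tree. For a rooted tree $T$ and vertex $v$, $\mathtt{Path}_T(v)$ is the set of vertices on the path in $T$ from the root to $v$, including both endpoints. *)

(* Defs.v *)
From Stdlib Require List.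
From mathcomp Require Import all_boot.
Set Implicit Arguments. Unset Strict Implicit. Unset Printing Implicit Defensive.

(* Graphs: vertices of a finType V, a vertex set A : {set V}, and an edge
   relation f : rel V (only edges between vertices of A are relevant). *)
Section Defs.
Variable V : finType.

Definition connected_on (f : rel V) (A : {set V}) : Prop :=
  forall x y, x \in A -> y \in A ->
    exists p : seq V, path f x p /\ last x p = y /\ all (fun z => z \in A) p.

Definition acyclic_on (f : rel V) (A : {set V}) : Prop :=
  ~ exists c : seq V, 3 <= size c /\ uniq c /\ cycle f c /\ all (fun z => z \in A) c.

Definition is_tree (f : rel V) (A : {set V}) : Prop :=
  (forall x y, f x y = f y x) /\ (forall x, ~~ f x x) /\
  A != set0 /\ connected_on f A /\ acyclic_on f A.

Definition is_comp (f : rel V) (B C : {set V}) : Prop :=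
  C \subset B /\ C != set0 /\ connected_on f C /\
  (forall x y, x \in C -> y \in B -> f x y -> y \in C).

(* Rooted trees with vertices labelled in V: a root and a list of subtrees
   (the order of the list is irrelevant, see same_rtree). *)
Inductive rtree : Type := Node of V & seq rtree.

Definition rroot (t : rtree) : V := let: Node r _ := t in r.

Fixpoint vlist (t : rtree) : seq V :=
  let: Node r ch := t in r :: flatten (map vlist ch).

Definition vset (t : rtree) : {set V} := [set x in vlist t].

Inductive search_tree (f : rel V) : {set V} -> rtree -> Prop :=
| ST_node (A : {set V}) (r : V) (ch : seq rtree) :
    r \in A ->
    (forall c, List.In c ch -> is_comp f (A :\ r) (vset c) /\ search_tree f (vset c) c) ->
    (forall C, is_comp f (A :\ r) C -> exists c, List.In c ch /\ vset c = C) ->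
    uniq (map vset ch) ->
    search_tree f A (Node r ch).

(* in_path t u v  <->  u \in Path_t(v): u lies on the path in t from the
   root to v (both endpoints included). *)
Inductive in_path : rtree -> V -> V -> Prop :=
| IP_root r ch v : v \in vlist (Node r ch) -> in_path (Node r ch) r v
| IP_child r ch c u v : List.In c ch -> in_path c u v -> in_path (Node r ch) u v.

Inductive child_of : rtree -> V -> V -> Prop :=
| CO_root r ch c : List.In c ch -> child_of (Node r ch) r (rroot c)
| CO_sub r ch c u w : List.In c ch -> child_of c u w -> child_of (Node r ch) u w.

(* equality of (unordered, vertex-labelled) rooted trees *)
Definition same_rtree (t1 t2 : rtree) : Prop :=
  vset t1 = vset t2 /\ rroot t1 = rroot t2 /\
  (forall u w, child_of t1 u w <-> child_of t2 u w).

End Defs.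

(* Main.v *)
Require Import Defs.
From mathcomp Require Import all_boot.
From Stdlib Require Import ClassicalEpsilon.
Set Implicit Arguments. Unset Strict Implicit. Unset Printing Implicit Defensive.

Section S.
Variable V : finType.
Implicit Types (g : rel V) (A B C D : {set V}) (t : rtree V).

Fixpoint rtree_ind' (P : rtree V -> Prop)
  (H : forall r ch, (forall c, List.In c ch -> P c) -> P (Node r ch)) t : P t :=
  match t with Node r ch => H r ch
    ((fix aux (l : seq (rtree V)) : forall c, List.In c l -> P c :=
      match l with
      | nil => fun c F => False_ind _ F
      | c0 :: l' => fun c Hin => match Hin with
           | or_introl E => eq_ind c0 P (rtree_ind' H c0) c E
           | or_intror Hin' => aux l' c Hin' end end) ch) end.

Lemma In_flatten c ch x : List.In c ch -> x \in vlist c -> x \in flatten (map (@vlist V) ch).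
Proof.
elim: ch => //= c0 ch IH [->|H] Hx; rewrite mem_cat ?Hx //.
by rewrite IH ?orbT.
Qed.

Lemma flatten_In ch x : x \in flatten (map (@vlist V) ch) -> exists c, List.In c ch /\ x \in vlist c.
Proof.
elim: ch => //= c0 ch IH; rewrite mem_cat => /orP[H|/IH [c [H1 H2]]].
  by exists c0; auto.
by exists c; auto.
Qed.

Lemma In_mem (T : eqType) (h : rtree V -> T) c l : List.In c l -> h c \in map h l.
Proof. elim: l => //= c0 l IH [->|H]; rewrite inE ?eqxx //. by rewrite IH ?orbT. Qed.

Lemma In_uniq (T : eqType) (h : rtree V -> T) l a b :
  uniq (map h l) -> List.In a l -> List.In b l -> h a = h b -> a = b.
Proof.
elim: l => //= c0 l IH /andP[Hn Hu] [Ea|Ha] [Eb|Hb] Eh; subst => //.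
- by move: Hn; rewrite Eh (In_mem h Hb).
- by move: Hn; rewrite -Eh (In_mem h Ha).
- exact: IH.
Qed.

Lemma In_map_iff (h : rtree V -> rtree V) l d :
  List.In d (map h l) <-> exists c, List.In c l /\ d = h c.
Proof.
elim: l => /= [|c0 l IH]; first by split => // [[c []]].
split => [[<-|/IH [c [H1 H2]]]|[c [[<-|H1] H2]]].
- by exists c0; auto.
- by exists c; auto.
- by left.
- by right; apply/IH; exists c.
Qed.

Lemma In_filter (p : pred (rtree V)) l c : List.In c (filter p l) <-> List.In c l /\ p c.
Proof.
elim: l => /= [|c0 l IH]; first by split => // [[]].
case: ifP => Hp /=; rewrite IH; split.
- by case=> [<-|[]]; auto.
- by case=> [[<-|H] Hc]; auto.
- by case; auto.
- by case=> [[<-|H] Hc]; [rewrite Hp in Hc|]; auto.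
Qed.

Lemma in_path_v t u v : in_path t u v -> v \in vlist t.
Proof.
elim => // r ch c u' v' Hc _ IH /=; rewrite inE (In_flatten Hc IH) orbT //.
Qed.

Lemma in_path_u t u v : in_path t u v -> u \in vlist t.
Proof.
elim => [r ch v' _|r ch c u' v' Hc _ IH] /=; rewrite inE ?eqxx //.
by rewrite (In_flatten Hc IH) orbT.
Qed.

Lemma vsetE t x : (x \in vset t) = (x \in vlist t).
Proof. by rewrite inE. Qed.

End S.


Section S2.
Variable V : finType.
Implicit Types (g : rel V) (A B C D : {set V}) (t : rtree V).

Lemma st_inv g A r ch : search_tree g A (Node r ch) ->
  [/\ r \in A,
   (forall c, List.In c ch -> is_comp g (A :\ r) (vset c) /\ search_tree g (vset c) c),
   (forall C, is_comp g (A :\ r) C -> exists c, List.In c ch /\ vset c = C) &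
   uniq (map (@vset V) ch)].
Proof. by move=> H; inversion H; subst. Qed.

Lemma path_closed g B D x p : (forall x y, x \in D -> y \in B -> g x y -> y \in D) ->
  x \in D -> path g x p -> all (mem B) p -> all (mem D) p.
Proof.
move=> Hcl; elim: p x => //= y p IH x Hx /andP[Hxy Hp] /andP[Hy Hall].
have HyD : y \in D by apply: Hcl Hxy.
by rewrite HyD (IH y).
Qed.

Lemma last_in (T : eqType) (P : pred T) x p : P x -> all P p -> P (last x p).
Proof. by elim: p x => //= y p IH x _ /andP[Hy Hp]; apply: IH. Qed.

Lemma comp_sub g B C D x : is_comp g B C -> is_comp g B D -> x \in C -> x \in D -> C \subset D.
Proof.
move=> [HCB [_ [HCc _]]] [_ [_ [_ HDcl]]] HxC HxD; apply/subsetP => y Hy.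
have [p [Hp [Hl Hall]]] := HCc x y HxC Hy.
have HallB : all (mem B) p.
  by apply/allP => z /(allP Hall) Hz; apply: (subsetP HCB).
rewrite -Hl; apply: (@last_in _ (mem D)) => //.
exact: (path_closed HDcl HxD Hp).
Qed.

Lemma comp_eq g B C D x : is_comp g B C -> is_comp g B D -> x \in C -> x \in D -> C = D.
Proof.
move=> HC HD HxC HxD; apply/eqP; rewrite eqEsubset.
by rewrite (comp_sub HC HD HxC HxD) (comp_sub HD HC HxD HxC).
Qed.

Definition rrel g B : rel V := [rel a b | g a b && (a \in B) && (b \in B)].

Lemma rrel_sym g B : symmetric g -> symmetric (rrel g B).
Proof. move=> Hs a b; rewrite /rrel /= (Hs a b) -!andbA; congr (_ && _); exact: andbC. Qed.

Lemma rrel_path g B x p : path (rrel g B) x p -> path g x p /\ all (mem B) p.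
Proof.
elim: p x => //= y p IH x; rewrite {1}/rrel /= => /andP[/andP[/andP[Hg _] Hy] Hp].
by have [H1 H2] := IH _ Hp; rewrite Hg Hy H1 H2.
Qed.

Lemma path_rrel g B x p : x \in B -> path g x p -> all (mem B) p -> path (rrel g B) x p.
Proof.
elim: p x => //= y p IH x Hx /andP[Hg Hp] /andP[Hy Ha].
by rewrite /rrel /= Hg Hx Hy (IH y).
Qed.

Lemma comp_exists g B x : symmetric g -> x \in B -> exists C, is_comp g B C /\ x \in C.
Proof.
move=> Hs HxB; set h := rrel g B.
have Hsym : connect_sym h by apply: sym_connect_sym; apply: rrel_sym.
have inB : forall y, connect h x y -> y \in B.
  move=> y /connectP [p Hp ->]; have [_ Ha] := rrel_path Hp.
  exact: (@last_in _ (mem B)).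
exists [set y | connect h x y]; split; last by rewrite inE connect0.
split; [|split; [|split]].
- by apply/subsetP => y; rewrite inE; apply: inB.
- by apply/set0Pn; exists x; rewrite inE connect0.
- move=> y z; rewrite !inE => Hy Hz.
  have: connect h y z by apply: connect_trans Hz; rewrite Hsym.
  move/connectP => [p Hp ->]; exists p; have [H1 _] := rrel_path Hp.
  split => //; split => //.
  apply/allP => w Hw; rewrite inE.
  apply: (connect_trans Hy); apply/connectP.
  move: Hw; elim: p y Hp {Hy H1} => //= a p IH y /andP[Hya Hp].
  rewrite inE => /orP[/eqP->|Hw]; first by exists [:: a]; rewrite //= Hya.
  have [q Hq Hl] := IH a Hp Hw; exists (a :: q) => //=; by rewrite Hya Hq.
- move=> y z; rewrite !inE => Hy Hz Hg; apply: (connect_trans Hy); apply: connect1.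
  by rewrite /h /rrel /= Hg (inB _ Hy) Hz.
Qed.

Lemma vset_st g A t : symmetric g -> search_tree g A t -> vset t = A.
Proof.
case: t => r ch Hs /st_inv [HrA Hch Hcomp _]; apply/setP => x.
rewrite vsetE /= inE.
case: (eqVneq x r) => [->|Hxr] /=; first by rewrite HrA.
apply/idP/idP.
- move/flatten_In => [c [Hc Hx]]; have [[Hsub _] _] := Hch c Hc.
  by have := subsetP Hsub x; rewrite vsetE inE => /(_ Hx) /andP[].
- move=> HxA; have HxAr : x \in A :\ r by rewrite !inE Hxr HxA.
  have [C [HC HxC]] := comp_exists Hs HxAr.
  have [c [Hc Ec]] := Hcomp C HC; apply: (In_flatten Hc).
  by rewrite -vsetE Ec.
Qed.

Lemma st_disj g A r ch c c' x : search_tree g A (Node r ch) -> List.In c ch -> List.In c' ch ->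
  x \in vlist c -> x \in vlist c' -> c = c'.
Proof.
move=> /st_inv [_ Hch _ Hu] Hc Hc' Hx Hx'.
apply: (In_uniq Hu Hc Hc').
have [HC _] := Hch c Hc; have [HC' _] := Hch c' Hc'.
by apply: (comp_eq (x:=x) HC HC'); rewrite vsetE.
Qed.

Lemma st_rnotin g A r ch c : search_tree g A (Node r ch) -> List.In c ch -> r \notin vlist c.
Proof.
move=> /st_inv [_ Hch _ _] Hc; have [[Hsub _] _] := Hch c Hc.
apply/negP => Hr; have := subsetP Hsub r; rewrite vsetE Hr => /(_ isT).
by rewrite !inE eqxx.
Qed.

Lemma st_root g A t u : search_tree g A t -> in_path t u (rroot t) -> u = rroot t.
Proof.
case: t => r ch Hst H; inversion H as [|r' ch' c u' v' Hc Hp]; subst => //.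
by have := in_path_v Hp; rewrite (negbTE (st_rnotin Hst Hc)).
Qed.

End S2.


Section S3.
Variable V : finType.
Implicit Types (g : rel V) (A B C D : {set V}) (t : rtree V).

Lemma rroot_in t : rroot t \in vlist t.
Proof. by case: t => r ch /=; rewrite mem_head. Qed.

Lemma ip_root t v : v \in vlist t -> in_path t (rroot t) v.
Proof. by case: t => r ch; constructor. Qed.

Lemma child_char g t : forall A u w, search_tree g A t ->
  (child_of t u w <-> in_path t u w /\ u <> w /\
     forall z, in_path t z w -> z = w \/ in_path t z u).
Proof.
elim/rtree_ind': t => r ch IH A u w Hst.
have [HrA Hch _ _] := st_inv Hst.
split.
- move=> H; inversion H as [r' ch' c Hc|r' ch' c u' w' Hc Hcw]; subst.
  + have Hw : rroot c \in vlist (Node u ch) by rewrite /= inE (In_flatten Hc (rroot_in c)) orbT.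
    split; first by constructor.
    split.
      move=> E; have := st_rnotin Hst Hc; by rewrite E rroot_in.
    move=> z Hz; inversion Hz as [|r' ch' c' z' w' Hc' Hp']; subst.
      by right; constructor; rewrite /= mem_head.
    have E := st_disj Hst Hc' Hc (in_path_v Hp') (rroot_in c); subst c'.
    have [_ Hstc] := Hch c Hc.
    by left; apply: (st_root Hstc Hp').
  + have [_ Hstc] := Hch c Hc.
    have [Hp [Hne Hz]] := (IH c Hc _ u w Hstc).1 Hcw.
    split; first by apply: IP_child _ Hc Hp.
    split => // z Hzw; inversion Hzw as [|r' ch' c' z' w' Hc' Hp']; subst.
      by right; constructor; rewrite /= inE (In_flatten Hc (in_path_u Hp)) orbT.
    have E := st_disj Hst Hc' Hc (in_path_v Hp') (in_path_v Hp); subst c'.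
    case: (Hz z Hp') => [->|Hzu]; [by left|right].
    exact: IP_child _ Hc Hzu.
- move=> [Hp [Hne Hz]]; inversion Hp as [r' ch' w' Hw|r' ch' c u' w' Hc Hcw]; subst.
  + move: Hw; rewrite /= inE => /orP[/eqP E|Hw]; first by subst.
    have [c [Hc Hwc]] := flatten_In Hw.
    have Hrc : in_path (Node u ch) (rroot c) w by apply: IP_child _ Hc (ip_root Hwc).
    case: (Hz _ Hrc) => [<-|Hr]; first by constructor.
    have := st_root Hst Hr => /= E.
    by have := st_rnotin Hst Hc; rewrite -E rroot_in.
  + have [_ Hstc] := Hch c Hc.
    eapply CO_sub; first exact Hc; apply/(IH c Hc _ u w Hstc); split => //; split => //.
    move=> z Hzw; case: (Hz z (IP_child _ Hc Hzw)) => [->|Hzu]; [by left|right].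
    inversion Hzu as [r' ch' u' Hu|r' ch' c'' z' u' Hc'' Hp'']; subst.
      by have := st_rnotin Hst Hc; rewrite (in_path_u Hzw).
    have E := st_disj Hst Hc'' Hc (in_path_v Hp'') (in_path_u Hcw); by subst c''.
Qed.

Lemma uniq_st g A1 A2 t1 t2 : search_tree g A1 t1 -> search_tree g A2 t2 ->
  (forall u v, in_path t1 u v <-> in_path t2 u v) -> same_rtree t1 t2.
Proof.
move=> H1 H2 E.
have Ev : forall v, (v \in vlist t1) = (v \in vlist t2).
  move=> v; apply/idP/idP => Hv.
  - exact: in_path_v ((E _ _).1 (ip_root Hv)).
  - exact: in_path_v ((E _ _).2 (ip_root Hv)).
split; first by apply/setP => v; rewrite !vsetE.
split.
  have : in_path t1 (rroot t2) (rroot t1).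
    by apply/E; apply: ip_root; rewrite -Ev rroot_in.
  by move/(st_root H1).
move=> u w; rewrite (child_char u w H1) (child_char u w H2).
split => [[Hp [Hne Hz]]|[Hp [Hne Hz]]]; split; try (by apply/E); split => // z.
- by move/E/Hz => [->|/E]; auto.
- by move/E/Hz => [->|/E]; auto.
Qed.

End S3.


Section S4.
Variable V : finType.
Implicit Types (g : rel V) (A B C D S : {set V}) (t : rtree V).
Variables (e f : rel V).
Hypothesis esym : symmetric e.
Hypothesis eacyc : acyclic_on e [set: V].
Hypothesis fsym : symmetric f.
Hypothesis fe : forall x y, f x y -> e x y.

Lemma KT A r C a b : is_comp e (A :\ r) C -> a \in C -> b \in C -> e a r -> e b r -> a = b.
Proof.
move=> [HCs [_ [HCc _]]] Ha Hb Har Hbr; apply/eqP/negP => /negP Hab.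
have [p [Hp [Hl Hall]]] := HCc a b Ha Hb.
move: Hl; case: (shortenP Hp) => p' Hp' Hu Hsub Hl.
apply: eacyc; exists [:: r, a & p'].
have HnC : forall z, z \in C -> z != r.
  by move=> z /(subsetP HCs); rewrite !inE => /andP[].
split.
  case: p' {Hp' Hu Hsub} Hl => [/= Eab|y q _] //.
  by move: Hab; rewrite Eab eqxx.
split.
  rewrite (cons_uniq r) Hu andbT inE negb_or eq_sym (HnC a Ha) /=.
  apply/negP => /Hsub Hr; have := allP Hall r Hr => /HnC; by rewrite eqxx.
split.
  by rewrite /= rcons_path Hp' Hl Hbr esym Har.
by apply/allP => z _; rewrite in_setT.
Qed.

Section WithS.
Variables (S : {set V}) (r : V).
Let X := S :\ r.
Let h := rrel f X.

Lemma hsym : connect_sym h.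
Proof. by apply: sym_connect_sym; apply: rrel_sym. Qed.

Lemma Wlem p : forall x, x \in S -> x != r -> path f x p -> all (mem S) p ->
  connect h x (last x p) \/ exists a, connect h x a /\ a \in X /\ f a r.
Proof.
have HX : forall x, x \in S -> x != r -> x \in X by move=> x Hx Hr; rewrite !inE Hx Hr.
elim: p => [|y p IH] x HxS Hxr /=; first by left; rewrite connect0.
move=> /andP[Hxy Hp] /andP[HyS Hall].
case: (eqVneq y r) => [Eyr|Hyr].
  by right; exists x; rewrite connect0 HX // -Eyr.
have Hxy' : h x y by rewrite /h /rrel /= Hxy !HX.
case: (IH y HyS Hyr Hp Hall) => [H|[a [H1 H2]]].
  by left; apply: connect_trans (connect1 Hxy') H.
by right; exists a; split => //; apply: connect_trans (connect1 Hxy') H1.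
Qed.

Lemma conn_closed A C x z : is_comp e (A :\ r) C -> S \subset A -> x \in C -> connect h x z -> z \in C.
Proof.
move=> [HCs [_ [_ HCcl]]] HSA Hx /connectP [p Hp ->].
have [Hpf Hall] := rrel_path Hp.
apply: (@last_in _ (mem C)) => //.
apply: (path_closed (B := A :\ r) HCcl Hx (sub_path fe Hpf)).
apply/allP => w /(allP Hall); rewrite !inE => /andP[-> /(subsetP HSA) ->] //.
Qed.

Lemma KC A C x y : S \subset A -> connected_on f S -> is_comp e (A :\ r) C ->
  x \in S -> x \in C -> y \in S -> y \in C -> connect h x y.
Proof.
move=> HSA HSc HC HxS HxC HyS HyC.
have [HCs _] := HC.
have HnC : forall z, z \in C -> z != r.
  by move=> z /(subsetP HCs); rewrite !inE => /andP[].
have [p [Hp [Hl Hall]]] := HSc x y HxS HyS.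
have [q [Hq [Hlq Hallq]]] := HSc y x HyS HxS.
case: (Wlem HxS (HnC x HxC) Hp Hall) => [|[a [Hxa [HaX Har]]]]; first by rewrite Hl.
case: (Wlem HyS (HnC y HyC) Hq Hallq) => [|[b [Hyb [HbX Hbr]]]].
  by rewrite Hlq hsym.
have HaC := conn_closed HC HSA HxC Hxa.
have HbC := conn_closed HC HSA HyC Hyb.
have Eab := KT HC HaC HbC (fe Har) (fe Hbr); subst b.
by apply: connect_trans Hxa _; rewrite hsym.
Qed.

Lemma conn_SC A C : S \subset A -> connected_on f S -> is_comp e (A :\ r) C ->
  connected_on f (S :&: C).
Proof.
move=> HSA HSc HC x y; rewrite !inE => /andP[HxS HxC] /andP[HyS HyC].
have /connectP [p Hp Hl] := KC HSA HSc HC HxS HxC HyS HyC.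
have [Hpf Hall] := rrel_path Hp.
exists p; split => //; split; first by rewrite Hl.
have [HCs [_ [_ HCcl]]] := HC.
have HallC : all (mem C) p.
  apply: (path_closed (B := A :\ r) HCcl HxC (sub_path fe Hpf)).
  apply/allP => z /(allP Hall); rewrite !inE => /andP[-> /(subsetP HSA) ->] //.
apply/allP => z Hz; have := allP HallC z Hz; rewrite /= inE => ->.
by have := allP Hall z Hz; rewrite !inE => /andP[_ ->].
Qed.

Lemma comp_SC A C : S \subset A -> connected_on f S -> is_comp e (A :\ r) C ->
  S :&: C != set0 -> is_comp f (S :\ r) (S :&: C).
Proof.
move=> HSA HSc HC H0; have [HCs [_ [_ HCcl]]] := HC.
split; [|split; [|split]] => //.
- apply/subsetP => x; rewrite !inE => /andP[HxS /(subsetP HCs)].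
  by rewrite !inE HxS => /andP[-> _].
- exact: conn_SC HSA HSc HC.
- move=> x y; rewrite !inE => /andP[HxS HxC] /andP[Hyr HyS] Hf.
  rewrite HyS; apply: HCcl HxC _ (fe Hf).
  by rewrite !inE Hyr (subsetP HSA).
Qed.

End WithS.

Lemma map_ext_In (T : Type) (h1 h2 : rtree V -> T) l :
  (forall c, List.In c l -> h1 c = h2 c) -> map h1 l = map h2 l.
Proof. elim: l => //= c l IH H; rewrite H ?IH //; auto. Qed.

Lemma mem_map_In (T : eqType) (h : rtree V -> T) l X :
  X \in map h l -> exists c, List.In c l /\ X = h c.
Proof.
elim: l => //= c l IH; rewrite inE => /orP[/eqP->|/IH [c' [H1 H2]]].
  by exists c; auto.
by exists c'; auto.
Qed.


Lemma ip_inv (r u v : V) ch : in_path (Node r ch) u v ->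
  (u = r /\ v \in vlist (Node r ch)) \/ exists c, List.In c ch /\ in_path c u v.
Proof. move=> H; inversion H; subst; [left|right; eexists]; eauto. Qed.

Lemma exist_main t : forall A S, search_tree e A t -> S \subset A -> S != set0 ->
  connected_on f S ->
  exists TH, search_tree f S TH /\ vset TH = S /\
    forall v, v \in S -> forall u, in_path TH u v <-> (in_path t u v /\ u \in S).
Proof.
elim/rtree_ind': t => r ch IH A S Hst HSA HS0 HSc.
have [HrA Hch Hcomp Hu] := st_inv Hst.
have HvA := vset_st esym Hst.
have inA : forall x, x \in A -> x != r -> exists c, List.In c ch /\ x \in vlist c.
  move=> x; rewrite -HvA vsetE /= inE => /orP[/eqP->|Hx]; first by rewrite eqxx.
  by move=> _; apply: flatten_In.
case: (boolP (r \in S)) => HrS.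
- pose Q c d := search_tree f (S :&: vset c) d /\ vset d = S :&: vset c /\
    forall v, v \in S :&: vset c -> forall u, in_path d u v <-> (in_path c u v /\ u \in S :&: vset c).
  pose gf c := epsilon (inhabits c) (Q c).
  pose pd := fun c : rtree V => S :&: vset c != set0.
  have Hg : forall c, List.In c ch -> pd c -> Q c (gf c).
    move=> c Hc Hpd; apply: epsilon_spec; have [HC Hstc] := Hch c Hc.
    apply: (IH c Hc _ _ Hstc); [exact: subsetIr|exact: Hpd|].
    exact: conn_SC HSA HSc HC.
  have HcompS : forall c, List.In c ch -> pd c -> is_comp f (S :\ r) (S :&: vset c).
    by move=> c Hc Hpd; have [HC _] := Hch c Hc; apply: comp_SC HSA HSc HC Hpd.
  pose chH := map gf (filter pd ch).
  have HchH : forall d, List.In d chH -> exists c, List.In c ch /\ pd c /\ d = gf c.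
    move=> d /In_map_iff [c [/In_filter [Hc Hpd] ->]]; by exists c.
  have HinH : forall c, List.In c ch -> pd c -> List.In (gf c) chH.
    by move=> c Hc Hpd; apply/In_map_iff; exists c; split => //; apply/In_filter.
  have Hvs : vset (Node r chH) = S.
    apply/setP => x; rewrite vsetE /= inE.
    case: (eqVneq x r) => [->|Hxr] /=; first by rewrite HrS.
    apply/idP/idP.
    + move/flatten_In => [d [Hd Hx]]; have [c [Hc [Hpd Ed]]] := HchH d Hd.
      have [_ [Hv _]] := Hg c Hc Hpd; move: Hx; rewrite -vsetE Ed Hv inE.
      by case/andP.
    + move=> HxS; have [c [Hc Hxc]] := inA x (subsetP HSA x HxS) Hxr.
      have Hpd : pd c by apply/set0Pn; exists x; rewrite inE HxS vsetE.
      apply: (In_flatten (HinH c Hc Hpd)).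
      have [_ [Hv _]] := Hg c Hc Hpd; by rewrite -vsetE Hv inE HxS vsetE.
  exists (Node r chH); split; last split => //.
  + apply: ST_node => //.
    * move=> d Hd; have [c [Hc [Hpd Ed]]] := HchH d Hd.
      have [Hs [Hv _]] := Hg c Hc Hpd; rewrite Ed Hv; split => //.
      exact: HcompS.
    * move=> D HD; have [HDs [HD0 _]] := HD; have [x Hx] := set0Pn _ HD0.
      have := subsetP HDs x Hx; rewrite !inE => /andP[Hxr HxS].
      have [c [Hc Hxc]] := inA x (subsetP HSA x HxS) Hxr.
      have Hpd : pd c by apply/set0Pn; exists x; rewrite inE HxS vsetE.
      exists (gf c); split; first exact: HinH.
      have [_ [Hv _]] := Hg c Hc Hpd; rewrite Hv.
      by apply: (comp_eq (x := x) (HcompS c Hc Hpd) HD) => //; rewrite inE HxS vsetE.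
    * have -> : map (@vset V) chH = map (fun c => S :&: vset c) (filter pd ch).
        rewrite /chH -map_comp; apply: map_ext_In => c /In_filter [Hc Hpd] /=.
        by have [_ [Hv _]] := Hg c Hc Hpd.
      have -> : map (fun c => S :&: vset c) (filter pd ch) =
                map (setI S) (filter [pred X | S :&: X != set0] (map (@vset V) ch)).
        by rewrite filter_map -map_comp.
      rewrite map_inj_in_uniq; first exact: filter_uniq.
      move=> X Y; rewrite !mem_filter /= => /andP[HX0 HX] /andP[_ HY] EXY.
      have [c1 [Hc1 EX]] := mem_map_In HX; have [c2 [Hc2 EY]] := mem_map_In HY; subst X Y.
      have [x Hx] := set0Pn _ HX0.
      have Hx2 := Hx; rewrite EXY in Hx2; move: Hx Hx2; rewrite !inE => /andP[_ H1] /andP[_ H2].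
      have [HC1 _] := Hch c1 Hc1; have [HC2 _] := Hch c2 Hc2.
      by apply: (comp_eq (x := x) HC1 HC2); rewrite vsetE.
  + clearbody chH gf; move=> v HvS u; split.
    * move=> /ip_inv [[-> Hv]|[d [Hd Hp]]].
        split => //; constructor; rewrite -vsetE HvA; exact: (subsetP HSA).
      have [c [Hc [Hpd Ed]]] := HchH d Hd; have [_ [Hv Hip]] := Hg c Hc Hpd.
      subst d; have Hvd := in_path_v Hp; rewrite -vsetE Hv in Hvd.
      have [Hp' Hu'] := (Hip v Hvd u).1 Hp.
      split; first exact: IP_child _ Hc Hp'.
      by move: Hu'; rewrite inE => /andP[].
    * move=> [/ip_inv [[-> Hv]|[c [Hc Hp]]] HuS].
        by constructor; rewrite -vsetE Hvs.
      have Hpd : pd c by apply/set0Pn; exists v; rewrite inE HvS vsetE (in_path_v Hp).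
      have [_ [Hv Hip]] := Hg c Hc Hpd.
      apply: (IP_child _ (HinH c Hc Hpd)); apply/(Hip v); first by rewrite inE HvS vsetE (in_path_v Hp).
      by rewrite inE HuS vsetE (in_path_u Hp).
- have [x HxS] := set0Pn _ HS0.
  have Hxr : x != r by apply/eqP => E; move: HrS; rewrite -E HxS.
  have [c [Hc Hxc]] := inA x (subsetP HSA x HxS) Hxr.
  have [HC Hstc] := Hch c Hc.
  have HSC : S \subset vset c.
    have [_ [_ [_ HCcl]]] := HC.
    apply/subsetP => y HyS; have [p [Hp [Hl Hall]]] := HSc x y HxS HyS.
    rewrite -Hl; apply: (@last_in _ (mem (vset c))); first by rewrite /= inE.
    apply: (path_closed (B := A :\ r) HCcl _ (sub_path fe Hp)); first by rewrite inE.
    apply/allP => z /(allP Hall) /= HzS; rewrite !inE (subsetP HSA z HzS) andbT.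
    by apply/eqP => E; move: HrS; rewrite -E HzS.
  have [d [Hd [Hvd Hip]]] := IH c Hc _ _ Hstc HSC HS0 HSc.
  exists d; split => //; split => // v HvS u; rewrite Hip //; split.
  + by move=> [Hp HuS]; split => //; apply: IP_child _ Hc Hp.
  + move=> [/ip_inv [[Eu Hv]|[c' [Hc' Hp]]] HuS]; split => //.
      by move: HrS; rewrite -Eu HuS.
    have Hvc : v \in vlist c by rewrite -vsetE (subsetP HSC v HvS).
    by have E := st_disj Hst Hc' Hc (in_path_v Hp) Hvc; subst c'.
Qed.

End S4.

Theorem mainTheorem13 (V : finType) (e : rel V) (T : rtree V)
    (S : {set V}) (f : rel V) :
  is_tree e [set: V] ->
  search_tree e [set: V] T ->
  S != set0 ->
  (forall x y, f x y -> [/\ x \in S, y \in S & e x y]) ->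
  (forall x y, f x y = f y x) ->
  connected_on f S ->
  exists TH : rtree V,
    (search_tree f S TH /\
     forall v, v \in S -> forall u, in_path TH u v <-> (in_path T u v /\ u \in S)) /\
    (forall TH' : rtree V,
       search_tree f S TH' ->
       (forall v, v \in S -> forall u, in_path TH' u v <-> (in_path T u v /\ u \in S)) ->
       same_rtree TH TH').
Proof.
move=> [esym [_ [_ [_ eacyc]]]] Hst HS0 Hf fsym HSc.
have fe : forall x y, f x y -> e x y by move=> x y /Hf [].
have [TH [Hst' [Hv Hip]]] := exist_main esym eacyc fsym fe Hst (subsetT S) HS0 HSc.
exists TH; split => //.
move=> TH' Hst2 Hip2; apply: (uniq_st Hst' Hst2) => u v.
case: (boolP (v \in S)) => HvS.
  by rewrite Hip // Hip2.
split => H; have := in_path_v H; rewrite -vsetE ?Hv ?(vset_st fsym Hst2); by rewrite (negbTE HvS).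
Qed.
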